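(* Let $n\ge1$, $\gamma\ge0$, let $A$ be a disk in $\mathbb{R}^2$ of radius $n^\gamma$, and let $z>0$ with $z\le n^\gamma$. Let $Q$ be a convex cell of a partition of $A$ into convex cells each of diameter at most $z$. Let $s,d$ be independent uniformly distributed points in $A$. Then the probability that the line segment from $s$ to $d$ intersects $Q$ is at most $6\,\frac{z}{n^\gamma}$. *)

(* Defs.v *)
From HB Require Import structures.
From mathcomp Require Import all_boot all_order all_algebra.
From mathcomp Require Import all_classical all_reals all_analysis.
Set Implicit Arguments. Unset Strict Implicit. Unset Printing Implicit Defensive.
Import Order.TTheory GRing.Theory Num.Theory.
Import numFieldNormedType.Exports.
Local Open Scope classical_set_scope.
Local Open Scope ring_scope.

Section Defs.
Variable R : realType.
Local Notation P2 := (R * R)%type.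

Definition dist2 (p q : P2) : R :=
  Num.sqrt ((p.1 - q.1) ^+ 2 + (p.2 - q.2) ^+ 2).

Definition disk (c : P2) (r : R) : set P2 :=
  [set p | (p.1 - c.1) ^+ 2 + (p.2 - c.2) ^+ 2 <= r ^+ 2].

Definition cvx (t : R) (p q : P2) : P2 :=
  ((1 - t) * p.1 + t * q.1, (1 - t) * p.2 + t * q.2).

Definition convex_set2 (Q : set P2) : Prop :=
  forall p q t, Q p -> Q q -> 0 <= t <= 1 -> Q (cvx t p q).

Definition diam_le (Q : set P2) (z : R) : Prop :=
  forall p q, Q p -> Q q -> dist2 p q <= z.

Definition segment (s d : P2) : set P2 :=
  [set cvx t s d | t in `[0, 1]%classic].

Definition convex_partition (A : set P2) (z : R) (Cells : set (set P2)) : Prop :=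
  [/\ (forall C, Cells C -> C !=set0 /\ convex_set2 C /\ diam_le C z),
      (forall C C', Cells C -> Cells C' -> C `&` C' !=set0 -> C = C') &
      \bigcup_(C in Cells) C = A].

Definition seg_meets (Q : set P2) : set (P2 * P2) :=
  [set sd | segment sd.1 sd.2 `&` Q !=set0].

End Defs.

Definition leb2 (R : realType) :=
  ((@lebesgue_measure R) \x (@lebesgue_measure R))%E.
Definition leb4 (R : realType) := ((@leb2 R) \x (@leb2 R))%E.

(* Main.v *)
Require Import Defs.
From HB Require Import structures.
From mathcomp Require Import all_boot all_order all_algebra.
From mathcomp Require Import all_classical all_reals all_analysis.
From mathcomp Require Import ring lra.
Import Order.TTheory GRing.Theory Num.Theory.
Import numFieldNormedType.Exports.
Set Implicit Arguments. Unset Strict Implicit. Unset Printing Implicit Defensive.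
Local Open Scope classical_set_scope.
Local Open Scope ring_scope.

Lemma mlev d (T : measurableType d) (R : realType) (f : T -> R) (a : R) :
  measurable_fun setT f -> measurable [set x | f x <= a].
Proof.
move=> mf; have := mf measurableT _ (measurable_itv `]-oo, a]).
by rewrite setTI; congr measurable; apply/seteqP; split => x /=; rewrite in_itv.
Qed.

Lemma mgev d (T : measurableType d) (R : realType) (f : T -> R) (a : R) :
  measurable_fun setT f -> measurable [set x | a <= f x].
Proof.
move=> mf; have := mf measurableT _ (measurable_itv `[a, +oo[).
by rewrite setTI; congr measurable; apply/seteqP; split => x /=; rewrite in_itv/= andbT.
Qed.

Notation mfD := measurable_realfun.measurable_funD.
Notation mfM := measurable_realfun.measurable_funM.
Notation mfB := measurable_realfun.measurable_funB.
Notation mfX := measurable_realfun.measurable_funX.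
Section M. Variable R : realType.
Local Notation P2 := (R * R)%type.

Lemma measurable_disk (c : P2) (r : R) : measurable (disk c r).
Proof.
apply: mlev; apply: mfD; apply: mfX; apply: mfB => //.
all: try exact: measurable_fst.
all: try exact: measurable_snd.
Qed.

Lemma mcvx1 (t : R) : measurable_fun setT (fun sd : P2 * P2 => (cvx t sd.1 sd.2).1).
Proof.
rewrite /cvx /=; apply: mfD; apply: mfM => //.
  exact: measurableT_comp measurable_fst measurable_fst.
exact: measurableT_comp measurable_fst measurable_snd.
Qed.

Lemma mcvx2 (t : R) : measurable_fun setT (fun sd : P2 * P2 => (cvx t sd.1 sd.2).2).
Proof.
rewrite /cvx /=; apply: mfD; apply: mfM => //.
  exact: measurableT_comp measurable_snd measurable_fst.
exact: measurableT_comp measurable_snd measurable_snd.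
Qed.

Definition box (a1 b1 a2 b2 : R) : set P2 :=
  [set p | a1 <= p.1 <= b1 /\ a2 <= p.2 <= b2].

Definition G (t : R) (B : set P2) : set (P2 * P2) := [set sd | B (cvx t sd.1 sd.2)].

Lemma measurable_G t a1 b1 a2 b2 : measurable (G t (box a1 b1 a2 b2)).
Proof.
have -> : G t (box a1 b1 a2 b2) =
  ([set sd | a1 <= (cvx t sd.1 sd.2).1] `&` [set sd | (cvx t sd.1 sd.2).1 <= b1]) `&`
  ([set sd | a2 <= (cvx t sd.1 sd.2).2] `&` [set sd | (cvx t sd.1 sd.2).2 <= b2]).
  apply/seteqP; split => x /=; rewrite /G /box /=.
    by move=> [/andP[? ?] /andP[? ?]].
  by move=> [[? ?] [? ?]]; split; apply/andP; split.
apply: measurableI; apply: measurableI.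
- exact: mgev (mcvx1 t).
- exact: mlev (mcvx1 t).
- exact: mgev (mcvx2 t).
- exact: mlev (mcvx2 t).
Qed.
End M.

Lemma leb2_sigma_finite (R : realType) : sigma_finite setT (@leb2 R).
Proof.
have /sigma_finiteP[F [TF ndF Foo]] := sigma_finiteT (@lebesgue_measure R).
exists (fun n => F n `*` F n).
 rewrite -setXTT TF predeqE => -[x y]; split.
    move=> [/= [n _ Fnx] [k _ Gky]]; exists (maxn n k) => //; split.
    - by move: x Fnx; exact/subsetPset/ndF/leq_maxl.
    - by move: y Gky; exact/subsetPset/ndF/leq_maxr.
  by move=> [n _ []/= ? ?]; split; exists n.
move=> k; have [? ?] := Foo k.
split; first exact: measurableX.
by rewrite /leb2 product_measure1E// lte_mul_pinfty// ge0_fin_numE.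
Qed.

HB.instance Definition _ (R : realType) := Measure.on (@leb2 R).
HB.instance Definition _ (R : realType) :=
  Measure_isSigmaFinite.Build _ _ _ (@leb2 R) (@leb2_sigma_finite R).

Section M. Variable R : realType.
Local Notation P2 := (R * R)%type.

Lemma leb_cc (a b : R) : a <= b -> lebesgue_measure `[a, b]%classic = (b - a)%:E.
Proof.
rewrite le_eqVlt => /orP[/eqP->|ab]; last by rewrite lebesgue_measure_itv /= lte_fin ab.
by rewrite lebesgue_measure_itv /= ltxx subrr.
Qed.

Lemma box_setX (a1 b1 a2 b2 : R) :
  box a1 b1 a2 b2 = `[a1, b1]%classic `*` `[a2, b2]%classic.
Proof.
by apply/seteqP; split => p /=; rewrite /box !in_itv /=; [case=> -> ->|case=> -> ->].
Qed.

Lemma measurable_box (a1 b1 a2 b2 : R) : measurable (box a1 b1 a2 b2).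
Proof. by rewrite box_setX; apply: measurableX; exact: measurable_itv. Qed.

Lemma leb2_box (a1 b1 a2 b2 : R) : a1 <= b1 -> a2 <= b2 ->
  @leb2 R (box a1 b1 a2 b2) = ((b1 - a1) * (b2 - a2))%:E.
Proof.
move=> h1 h2; rewrite box_setX /leb2 product_measure1E; last 2 first.
- exact: measurable_itv.
- exact: measurable_itv.
by rewrite EFinM; congr (_ * _)%E; exact: leb_cc.
Qed.
End M.

Section M. Variable R : realType.
Local Notation P2 := (R * R)%type.
Local Notation P2m := (measurableTypeR R * measurableTypeR R)%type.

Lemma int_indic_cst (A : set P2m) (C : R) : measurable A -> 0 <= C ->
  (\int[@leb2 R]_s ((\1_A s)%:E * C%:E) = @leb2 R A * C%:E)%E.
Proof.
move=> mA C0; rewrite ge0_integralZr//.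
  by rewrite integral_indic// setIT.
- exact: (measurable_realfun.measurable_EFinP (R:=R) setT (\1_A)).2 (measurable_realfun.measurable_indic (R:=R) mA).
all: try by move=> x _; rewrite lee_fin indicE; case: (_ \in _).
all: by rewrite lee_fin.
Qed.

Lemma G_bound1 (t : R) (A : set P2m) a1 b1 a2 b2 : 0 < t -> a1 <= b1 -> a2 <= b2 ->
  measurable A ->
  (@leb4 R (G t (box a1 b1 a2 b2) `&` (A `*` A))
     <= @leb2 R A * (((b1 - a1) * (b2 - a2)) / (t ^+ 2))%:E)%E.
Proof.
move=> t0 h1 h2 mA.
have mX : measurable (G t (box a1 b1 a2 b2) `&` (A `*` A)).
  by apply: measurableI; [exact: measurable_G|exact: measurableX].
rewrite -(@int_indic_cst A _ mA); last by apply: divr_ge0; [apply: mulr_ge0; lra|exact: sqr_ge0].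
rewrite /leb4 /product_measure1.
apply: ge0_le_integral => //.
- exact: measurable_fun_xsection.
- apply: emeasurable_funM => //.
  exact: (measurable_realfun.measurable_EFinP (R:=R) setT (\1_A)).2 (measurable_realfun.measurable_indic (R:=R) mA).
move=> s _ /=; rewrite indicE; case: (boolP (s \in A)) => sA; last first.
  rewrite mul0e /= (_ : xsection _ s = set0) ?measure0 //.
  apply/seteqP; split => d //=; rewrite /xsection /= inE => -[_ [As _]].
  by move: sA; rewrite notin_setE.
rewrite mul1e.
set a1' := (a1 - (1 - t) * s.1) / t; set b1' := (b1 - (1 - t) * s.1) / t.
set a2' := (a2 - (1 - t) * s.2) / t; set b2' := (b2 - (1 - t) * s.2) / t.
have e1 : a1' <= b1' by rewrite /a1' /b1' ler_pM2r ?invr_gt0 // lerD2r.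
have e2 : a2' <= b2' by rewrite /a2' /b2' ler_pM2r ?invr_gt0 // lerD2r.
apply: (@le_trans _ _ (@leb2 R (box a1' b1' a2' b2'))).
  apply: le_measure; rewrite ?inE //; first exact: measurable_xsection.
  by apply: measurable_box.
  move=> d; rewrite /xsection /= inE => -[+ _]; rewrite /G /box /cvx /=.
  move=> [/andP[l1 u1] /andP[l2 u2]]; rewrite /a1' /b1' /a2' /b2'.
  rewrite !ler_pdivlMr // !ler_pdivrMr //; lra.
rewrite leb2_box // lee_fin /a1' /b1' /a2' /b2' le_eqVlt; apply/orP; left; apply/eqP.
by field; lra.
Qed.
End M.

Section M2. Variable R : realType.
Local Notation P2m := (measurableTypeR R * measurableTypeR R)%type.

Lemma leb4_swap (X : set (P2m * P2m)) : measurable X ->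
  @leb4 R X = ((@leb2 R) \x^ (@leb2 R))%E X.
Proof.
move=> mX; rewrite /leb4; apply: product_measure_unique => // A B mA mB.
exact: product_measure2E.
Qed.

Lemma G_bound2 (t : R) (A : set P2m) a1 b1 a2 b2 : t < 1 -> a1 <= b1 -> a2 <= b2 ->
  measurable A ->
  (@leb4 R (G t (box a1 b1 a2 b2) `&` (A `*` A))
     <= @leb2 R A * (((b1 - a1) * (b2 - a2)) / ((1 - t) ^+ 2))%:E)%E.
Proof.
move=> t1 h1 h2 mA.
have mX : measurable (G t (box a1 b1 a2 b2) `&` (A `*` A)).
  by apply: measurableI; [exact: measurable_G|exact: measurableX].
rewrite leb4_swap //.
rewrite -(@int_indic_cst R A _ mA); last by apply: divr_ge0; [apply: mulr_ge0; lra|exact: sqr_ge0].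
rewrite /product_measure2.
apply: ge0_le_integral => //.
- exact: measurable_fun_ysection.
- apply: emeasurable_funM => //.
  exact: (measurable_realfun.measurable_EFinP (R:=R) setT (\1_A)).2 (measurable_realfun.measurable_indic (R:=R) mA).
move=> d _ /=; rewrite indicE; case: (boolP (d \in A)) => dA; last first.
  rewrite mul0e /= (_ : ysection _ d = set0) ?measure0 //.
  apply/seteqP; split => s //=; rewrite /ysection /= inE => -[_ [_ Ad]].
  by move: dA; rewrite notin_setE.
rewrite mul1e.
have t0 : 0 < 1 - t by lra.
set a1' := (a1 - t * d.1) / (1 - t); set b1' := (b1 - t * d.1) / (1 - t).
set a2' := (a2 - t * d.2) / (1 - t); set b2' := (b2 - t * d.2) / (1 - t).
have e1 : a1' <= b1' by rewrite /a1' /b1' ler_pM2r ?invr_gt0 // lerD2r.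
have e2 : a2' <= b2' by rewrite /a2' /b2' ler_pM2r ?invr_gt0 // lerD2r.
apply: (@le_trans _ _ (@leb2 R (box a1' b1' a2' b2'))).
  apply: le_measure; rewrite ?inE //; first exact: measurable_ysection.
  by apply: measurable_box.
  move=> s; rewrite /ysection /= inE => -[+ _]; rewrite /G /box /cvx /=.
  move=> [/andP[l1 u1] /andP[l2 u2]]; rewrite /a1' /b1' /a2' /b2'.
  rewrite !ler_pdivlMr // !ler_pdivrMr //; lra.
rewrite leb2_box // lee_fin /a1' /b1' /a2' /b2' le_eqVlt; apply/orP; left; apply/eqP.
by field; lra.
Qed.
End M2.

Section M. Variable R : realType.
Local Notation P2 := (R * R)%type.
Local Notation P2m := (measurableTypeR R * measurableTypeR R)%type.

Lemma leb_co (a b : R) : a <= b -> lebesgue_measure `[a, b[%classic = (b - a)%:E.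
Proof.
rewrite le_eqVlt => /orP[/eqP->|ab]; last by rewrite lebesgue_measure_itv /= lte_fin ab.
by rewrite lebesgue_measure_itv /= ltxx subrr.
Qed.

Definition alph (j : nat) : R :=
  nth 0 [:: 55/100; 74/100; 86/100; 94/100; 98/100; 98/100; 94/100; 86/100; 74/100; 55/100] j.

Definition strip (c : P2) (r : R) (j : nat) : set P2m :=
  `[c.1 - alph j * r, c.1 + alph j * r]%classic `*`
  `[c.2 + (j%:R - 5) * (r / 6), c.2 + (j%:R - 4) * (r / 6)[%classic.

Lemma alph_ge0 j : 0 <= alph j.
Proof. by rewrite /alph; do 10?[case: j => [|j] /=; first lra]; rewrite nth_nil. Qed.

Lemma strip_disk (c : P2) (r : R) (j : nat) : 0 < r -> (j < 10)%N -> strip c r j `<=` disk c r.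
Proof.
move=> r0 j10 [x y]; rewrite /strip /disk /= !in_itv /= => -[/andP[l1 u1] /andP[l2 u2]].
have hx : (x - c.1) ^+ 2 <= alph j ^+ 2 * r ^+ 2.
  have := alph_ge0 j => a0; nra.
clear l1 u1; move: j10 hx l2 u2; rewrite /alph.
do 10?[case: j => [|j] /=; first by move=> _ hx l2 u2; nra].
by rewrite !ltnS ltn0.
Qed.

Lemma strip_triv (c : P2) (r : R) : 0 < r -> trivIset setT (strip c r).
Proof.
move=> r0 i j _ _ [[x y]]; rewrite /strip /= !in_itv /= => -[[_ /andP[l1 u1]] [_ /andP[l2 u2]]].
have h0 : 0 < r / 6 by lra.
have h1 : (i%:R - 5) * (r / 6) < (j%:R - 4) * (r / 6) :> R by lra.
have h2 : (j%:R - 5) * (r / 6) < (i%:R - 4) * (r / 6) :> R by lra.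
rewrite ltr_pM2r // in h1; rewrite ltr_pM2r // in h2.
clear l1 u1 l2 u2 h0.
have a : (i < j.+1)%N by rewrite -(ltr_nat R) -addn1 natrD; lra.
have b : (j < i.+1)%N by clear a; rewrite -(ltr_nat R) -addn1 natrD; lra.
by apply: anti_leq; rewrite -ltnS a /= -ltnS b.
Qed.

Lemma leb2_strip (c : P2) (r : R) j : 0 < r ->
  @leb2 R (strip c r j) = ((2 * alph j * r) * (r / 6))%:E.
Proof.
move=> r0; rewrite /strip /leb2 product_measure1E; last 2 first.
- exact: measurable_itv.
- exact: measurable_itv.
rewrite EFinM; congr (_ * _)%E.
  rewrite [in RHS](_ : 2 * alph j * r = (c.1 + alph j * r) - (c.1 - alph j * r)); last by ring.
  by apply: leb_cc; have := alph_ge0 j => a0; rewrite lerD2l; nra.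
rewrite [in RHS](_ : r / 6 = (c.2 + (j%:R - 4) * (r / 6)) - (c.2 + (j%:R - 5) * (r / 6))); last by ring.
by apply: leb_co; rewrite lerD2l ler_wpM2r //; [lra|lra].
Qed.

Lemma leb2_disk_ge (c : P2) (r : R) : 0 < r ->
  ((27 / 10 * r ^+ 2)%:E <= @leb2 R (disk c r))%E.
Proof.
move=> r0.
have mS : forall j : 'I_10, measurable (strip c r j).
  by move=> j; apply: measurableX; exact: measurable_itv.
apply: (@le_trans _ _ (@leb2 R (\big[setU/set0]_(j < 10) strip c r j))).
  rewrite measure_bigsetU_ord //; last first.
    by move=> i j _ _ h; apply/val_inj; exact: (strip_triv r0 _ _ h).
  rewrite (eq_bigr (fun j : 'I_10 => ((2 * alph j * r) * (r / 6))%:E)); last first.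
    by move=> j _; exact: leb2_strip.
  rewrite sumEFin lee_fin !big_ord_recr big_ord0 /= /alph /=; nra.
apply: le_measure; rewrite ?inE //.
- by apply: bigsetU_measurable => j _; exact: mS.
- exact: (measurable_disk c r).
move=> p; rewrite -bigcup_mkord => -[j /= j10]; exact: strip_disk.
Qed.
End M.

Section S. Variable R : realFieldType.

Lemma key_ineq (x K : R) : 1 <= x ->
  ((2 * x + 1) / (2 * K)) ^+ 2 != 0 ->
  (((2 * x + 1) / (2 * K)) ^+ 2)^-1 <= K ^+ 2 / x - K ^+ 2 / (x + 1).
Proof.
move=> x1 nz.
have K0 : K != 0 by apply: contraNneq nz => ->; rewrite mulr0 invr0 mulr0 expr0n.
have -> : (((2 * x + 1) / (2 * K)) ^+ 2)^-1 = 4 * K ^+ 2 / (2 * x + 1) ^+ 2.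
  by field; apply/andP; split => //; lra.
have -> : K ^+ 2 / x - K ^+ 2 / (x + 1) = K ^+ 2 / (x * (x + 1)).
  by field; apply/andP; split; lra.
have hK : 0 <= K ^+ 2 by exact: sqr_ge0.
rewrite ler_pdivrMr; last by nra.
rewrite mulrAC ler_pdivlMr; last by nra.
nra.
Qed.

Definition tk (L k : nat) : R := (2 * k%:R + 1) / (4 * L%:R).
Definition wk (L k : nat) : R :=
  if (L <= k)%N then ((tk L k) ^+ 2)^-1 else ((1 - tk L k) ^+ 2)^-1.

Lemma sum_wk (L : nat) : (0 < L)%N -> \sum_(0 <= k < 2 * L) wk L k <= (4 * L)%:R.
Proof.
move=> L0.
have L1 : 1 <= L%:R :> R by rewrite ler1n.
pose K : R := 2 * L%:R.
pose u k : R := if (L <= k)%N then K ^+ 2 / k%:R - K ^+ 2 / (k%:R + 1)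
  else K ^+ 2 / (K - k%:R - 1) - K ^+ 2 / (K - k%:R).
apply: (@le_trans _ _ (\sum_(0 <= k < 2 * L) u k)).
  apply: ler_sum_nat => k /andP[_ k2L]; rewrite /wk /u.
  have k2L' : k%:R + 1 <= K :> R.
    by rewrite /K natr1 -natrM ler_nat.
  case: ifP => Lk.
    have k1 : 1 <= k%:R :> R by rewrite ler1n; exact: leq_trans L0 Lk.
    have := @key_ineq k%:R K k1.
    rewrite /tk /K (_ : 2 * (2 * L%:R) = 4 * L%:R :> R); last by ring.
    apply; apply: expf_neq0 => //; rewrite mulf_neq0 //; try (rewrite invr_eq0); lra.
  have kL : k%:R + 1 <= L%:R :> R by rewrite natr1 ler_nat ltnNge Lk.
  have := @key_ineq (K - k%:R - 1) K.
  rewrite (_ : K - k%:R - 1 + 1 = K - k%:R); last by ring.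
  have -> : 1 - tk L k = (2 * (K - k%:R - 1) + 1) / (2 * K).
    by rewrite /tk /K; field; lra.
  apply; first by rewrite /K; lra.
  apply: expf_neq0; rewrite mulf_neq0 //; first by rewrite /K; lra.
  by rewrite invr_eq0 /K; lra.
rewrite (@big_cat_nat _ _ _ L) //=; last by rewrite leq_pmull.
rewrite (@telescope_sumr_eq _ 0 L (fun k => K ^+ 2 / (K - k%:R))) //; last first.
  move=> k /andP[_ kL]; rewrite /u leqNgt kL /=.
  by rewrite -natr1; congr (_ - _); congr (_ / _); ring.
rewrite (@telescope_sumr_eq _ L (2 * L) (fun k => - (K ^+ 2 / k%:R))); last first.
  move=> k /andP[Lk _]; rewrite /u Lk -natr1; ring.
  by rewrite leq_pmull.
rewrite /K natrM natrM /=.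
have -> : 2 * L%:R - 0%:R = 2 * L%:R :> R by rewrite subr0.
rewrite (_ : 2%:R = 2 :> R) // (_ : 4%:R = 4 :> R) //.
have Ln : L%:R != 0 :> R by lra.
rewrite le_eqVlt; apply/orP; left; apply/eqP; field; lra.
Qed.
End S.

Section G. Variable R : realType.
Local Notation P2 := (R * R)%type.

Lemma disk_coord (c p : P2) (r : R) : 0 < r -> disk c r p ->
  -r <= p.1 - c.1 <= r /\ -r <= p.2 - c.2 <= r.
Proof.
rewrite /disk /= => r0 h.
have h1 : (p.1 - c.1) ^+ 2 <= r ^+ 2 by have := sqr_ge0 (p.2 - c.2); lra.
have h2 : (p.2 - c.2) ^+ 2 <= r ^+ 2 by have := sqr_ge0 (p.1 - c.1); lra.
by split; apply/andP; split; nra.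
Qed.

Lemma dist2_ge1 (p q : P2) : p.1 - q.1 <= dist2 p q.
Proof.
rewrite /dist2; apply: (@le_trans _ _ `|p.1 - q.1|); first exact: ler_norm.
rewrite -sqrtr_sqr; apply: ler_wsqrtr; rewrite lerDl; exact: sqr_ge0.
Qed.

Lemma dist2_ge2 (p q : P2) : p.2 - q.2 <= dist2 p q.
Proof.
rewrite /dist2; apply: (@le_trans _ _ `|p.2 - q.2|); first exact: ler_norm.
rewrite -sqrtr_sqr; apply: ler_wsqrtr; rewrite lerDr; exact: sqr_ge0.
Qed.

Lemma inf_box (E : set R) (z m : R) : E !=set0 -> (forall x, E x -> m <= x) ->
  (forall x y, E x -> E y -> x - y <= z) ->
  forall x, E x -> inf E <= x <= inf E + z.
Proof.
move=> En lb dz x Ex; apply/andP; split.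
  by apply: ge_inf => //; exists m => y Ey; exact: lb.
rewrite -lerBlDr; apply: lb_le_inf => // y Ey.
by have := dz x y Ex Ey; lra.
Qed.

Lemma bbox (Q : set P2) (z : R) (c : P2) (r : R) : 0 < r -> Q !=set0 ->
  Q `<=` disk c r -> diam_le Q z ->
  exists x0 y0, forall p, Q p -> x0 <= p.1 <= x0 + z /\ y0 <= p.2 <= y0 + z.
Proof.
move=> r0 [q Qq] QA dQ.
exists (inf [set p.1 | p in Q]), (inf [set p.2 | p in Q]) => p Qp; split.
- apply: (@inf_box _ _ (c.1 - r)).
  + by exists q.1, q.
  + by move=> _ [p' Qp' <-]; have [/andP[h _] _] := disk_coord r0 (QA _ Qp'); lra.
  + move=> _ _ [p1 Qp1 <-] [p2 Qp2 <-].
    exact: le_trans (dist2_ge1 p1 p2) (dQ _ _ Qp1 Qp2).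
  + by exists p.
- apply: (@inf_box _ _ (c.2 - r)).
  + by exists q.2, q.
  + by move=> _ [p' Qp' <-]; have [_ /andP[h _]] := disk_coord r0 (QA _ Qp'); lra.
  + move=> _ _ [p1 Qp1 <-] [p2 Qp2 <-].
    exact: le_trans (dist2_ge2 p1 p2) (dQ _ _ Qp1 Qp2).
  + by exists p.
Qed.

Lemma grid (L : nat) (t : R) : (0 < L)%N -> 0 <= t <= 1 ->
  exists k, (k < 2 * L)%N /\ k%:R <= 2 * L%:R * t <= k%:R + 1.
Proof.
move=> L0 /andP[t0 t1].
have x0 : 0 <= 2 * L%:R * t by apply: mulr_ge0 => //; rewrite mulr_ge0 // ler0n.
have [lt|ge] := ltnP (Num.truncn (2 * L%:R * t)) (2 * L).
  exists (Num.truncn (2 * L%:R * t)); split => //.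
  have /andP[h1 h2] := truncn_itv x0; apply/andP; split => //.
  by rewrite natr1; exact: ltW.
exists (2 * L).-1; split; first by rewrite prednK ?leqnn // muln_gt0.
have e : ((2 * L).-1)%:R + 1 = 2 * L%:R :> R.
  by rewrite natr1 prednK ?muln_gt0 // natrM.
have : (2 * L)%:R <= 2 * L%:R * t.
  by move: ge; rewrite truncn_ge_nat.
rewrite natrM => h.
have h3 : 2 * L%:R * t <= 2 * L%:R * 1 by rewrite ler_wpM2l // mulr_ge0 // ler0n.
apply/andP; split; lra.
Qed.
End G.

Lemma dev_bound (R : realFieldType) (L r E w : R) : 0 < L -> -1 <= E <= 1 ->
  -(2 * r) <= w <= 2 * r -> -(r / (2 * L)) <= (E / (4 * L)) * w <= r / (2 * L).
Proof.
move=> L0 /andP[E1 E2] /andP[w1 w2].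
have p1 : 0 <= (1 - E) * (2 * r - w) by apply: mulr_ge0; lra.
have p2 : 0 <= (1 + E) * (2 * r + w) by apply: mulr_ge0; lra.
have p3 : 0 <= (1 - E) * (2 * r + w) by apply: mulr_ge0; lra.
have p4 : 0 <= (1 + E) * (2 * r - w) by apply: mulr_ge0; lra.
have h1 : - (2 * r) <= E * w by nra.
have h2 : E * w <= 2 * r by nra.
have -> : E / (4 * L) * w = (E * w) / (4 * L) by rewrite mulrAC.
have -> : r / (2 * L) = (2 * r) / (4 * L) by field; lra.
have L4 : 0 < 4 * L by lra.
rewrite -mulNr !ler_pM2r ?invr_gt0 //; lra.
Qed.

Lemma final_ineq (R : realFieldType) (z r Lr : R) : 0 < z -> 6 <= Lr ->
  Lr * z <= r -> r <= (Lr + 1) * z ->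
  (z + r / Lr) ^+ 2 * (4 * Lr) <= 162 / 10 * z * r.
Proof.
move=> z0 L6 h1 h2.
have L0 : 0 < Lr by lra.
have -> : (z + r / Lr) ^+ 2 * (4 * Lr) = 4 * (Lr * z + r) ^+ 2 / Lr.
  by field; lra.
rewrite ler_pdivrMr //.
rewrite mulrDl mul1r in h2.
have hu : 6 * z <= Lr * z by rewrite ler_wpM2r //; lra.
have -> : 162 / 10 * z * r * Lr = 162 / 10 * (Lr * z) * r by ring.
move: (Lr * z) hu h1 h2 => u hu h1 h2.
have s0 : 0 <= r - u by lra.
have sz : r - u <= z by lra.
have -> : r = u + (r - u) by ring.
move: (r - u) s0 sz => s s0 sz.
have p1 : 0 <= (u - 6 * s) * (u + 6 * s) by apply: mulr_ge0; lra.
have p2 : 0 <= u * s by apply: mulr_ge0; lra.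
nra.
Qed.

Unset Implicit Arguments.

Lemma seg_incl (R : realType) (Q : set (R * R)) (c : R * R) (r z x0 y0 : R) (L : nat) :
  0 < r -> (0 < L)%N ->
  (forall p, Q p -> x0 <= p.1 <= x0 + z /\ y0 <= p.2 <= y0 + z) ->
  seg_meets Q `<=` ~` (disk c r `*` disk c r) `|`
    \big[setU/set0]_(k < 2 * L) G (tk R L k)
      (box (x0 - r / (2 * L%:R)) (x0 + z + r / (2 * L%:R))
           (y0 - r / (2 * L%:R)) (y0 + z + r / (2 * L%:R))).
Proof.
move=> r0 L0 hb.
pose dd := r / (2 * L%:R).
pose B := box (x0 - dd) (x0 + z + dd) (y0 - dd) (y0 + z + dd).
move=> [s d] [p [[t t01 ep] Qp]].
case: (pselect (disk c r s /\ disk c r d)) => [[As Ad]|nA]; last by left.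
right.
have t01' : 0 <= t <= 1 by move: t01; rewrite /= in_itv.
have [k [k2L /andP[hk1 hk2]]] := grid L0 t01'.
rewrite -(bigcup_mkord _ (fun k => G (tk R L k) B)); exists k => //.
have [/andP[bx1 bx2] /andP[by1 by2]] := hb p Qp.
rewrite -ep /cvx /= in bx1 bx2 by1 by2.
have [/andP[s1 s2] /andP[s3 s4]] := disk_coord r0 As.
have [/andP[d1 d2] /andP[d3 d4]] := disk_coord r0 Ad.
have LR0 : 0 < L%:R :> R by rewrite ltr0n.
have E1 : -1 <= 2 * k%:R + 1 - 4 * L%:R * t <= 1 by apply/andP; split; lra.
have w1 : -(2 * r) <= d.1 - s.1 <= 2 * r by apply/andP; split; lra.
have w2 : -(2 * r) <= d.2 - s.2 <= 2 * r by apply/andP; split; lra.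
have /andP[f1 f2] := dev_bound LR0 E1 w1.
have /andP[f3 f4] := dev_bound LR0 E1 w2.
have e1 : (1 - tk R L k) * s.1 + tk R L k * d.1 =
  ((1 - t) * s.1 + t * d.1) + (2 * k%:R + 1 - 4 * L%:R * t) / (4 * L%:R) * (d.1 - s.1).
  by rewrite /tk; field; lra.
have e2 : (1 - tk R L k) * s.2 + tk R L k * d.2 =
  ((1 - t) * s.2 + t * d.2) + (2 * k%:R + 1 - 4 * L%:R * t) / (4 * L%:R) * (d.2 - s.2).
  by rewrite /tk; field; lra.
rewrite /G /B /box /cvx /= e1 e2 /dd.
by split; apply/andP; split; lra.
Qed.

Theorem lemmaC2 (R : realType) (n : nat) (gamma z : R) (c : R * R)
    (Cells : set (set (R * R))) (Q : set (R * R)) :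
  (1 <= n)%N -> 0 <= gamma -> 0 < z -> z <= powR n%:R gamma ->
  convex_partition (disk c (powR n%:R gamma)) z Cells -> Cells Q ->
  exists F : set ((R * R) * (R * R)),
    [/\ measurable F, seg_meets Q `<=` F &
      (@leb4 R (F `&` (disk c (powR n%:R gamma) `*` disk c (powR n%:R gamma)))
        <= (6 * z / powR n%:R gamma)%:E
           * (@leb2 R (disk c (powR n%:R gamma)) * @leb2 R (disk c (powR n%:R gamma))))%E].
Proof.
move=> n1 g0 z0 zr [cellP _ cover] CQ.
have r0 : 0 < powR n%:R gamma by apply: powR_gt0; rewrite ltr0n.
move: (powR n%:R gamma) r0 zr cover => r r0 zr cover.
have QA : Q `<=` disk c r by rewrite -cover => p Qp; exists Q.
have [Qn [_ dQ]] := cellP Q CQ.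
have mA : measurable (disk c r) := measurable_disk c r.
have hAub : (@leb2 R (disk c r) <= (2 * r * (2 * r))%:E)%E.
  apply: (@le_trans _ _ (@leb2 R (box (c.1 - r) (c.1 + r) (c.2 - r) (c.2 + r)))).
    apply: le_measure; rewrite ?inE //; first exact: measurable_box.
    move=> p /(disk_coord r0) [/andP[h1 h2] /andP[h3 h4]]; rewrite /box /=.
    by split; apply/andP; split; lra.
  rewrite leb2_box; [|lra|lra]; rewrite lee_fin; lra.
have hAlb := leb2_disk_ge c r0.
have lamE : @leb2 R (disk c r) = (fine (@leb2 R (disk c r)))%:E.
  by rewrite fineK // ge0_fin_numE ?measure_ge0 // (le_lt_trans hAub) // ltry.
move: (fine _) lamE => lam lamE.
have lamlb : 27 / 10 * r ^+ 2 <= lam by rewrite -lee_fin -lamE.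
rewrite lamE.
have lam0 : 0 <= lam by apply: le_trans lamlb; apply: mulr_ge0; [lra|exact: sqr_ge0].
have [small|big] := leP r (6 * z).
  exists setT; split => //.
  rewrite setTI (_ : @leb4 R _ = @leb2 R (disk c r) * @leb2 R (disk c r))%E; last first.
    exact: product_measure1E.
  rewrite lamE -!EFinM lee_fin.
  have h : 1 <= 6 * z / r by rewrite ler_pdivlMr //; lra.
  rewrite -[X in X <= _]mul1r ler_wpM2r //; exact: mulr_ge0.
have rz0 : 0 <= r / z by apply: divr_ge0; lra.
have /andP[hL1 hL2] := truncn_itv rz0.
have L6n : (6 <= Num.truncn (r / z))%N.
  by rewrite truncn_ge_nat // ler_pdivlMr //; lra.
move: (Num.truncn (r / z)) hL1 hL2 L6n => L hL1 hL2 L6n.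
rewrite -natr1 in hL2.
have L6 : 6 <= L%:R :> R by rewrite (ler_nat R 6 L).
have L0 : (0 < L)%N by exact: leq_trans L6n.
have Lz1 : L%:R * z <= r by rewrite -ler_pdivlMr.
have Lz2 : r <= (L%:R + 1) * z by rewrite -ler_pdivrMr //; exact: ltW.
have [x0 [y0 hb]] := bbox r0 Qn QA dQ.
pose dd := r / (2 * L%:R).
pose B := box (x0 - dd) (x0 + z + dd) (y0 - dd) (y0 + z + dd).
exists (~` (disk c r `*` disk c r) `|` \big[setU/set0]_(k < 2 * L) G (tk R L k) B).
split.
- apply: measurableU.
    by apply: measurableC; exact: measurableX.
  by apply: bigsetU_measurable => k _; exact: measurable_G.
- exact: seg_incl.
have mAA : measurable (disk c r `*` disk c r) by exact: measurableX.
have mGk : forall k, measurable (G (tk R L k) B `&` (disk c r `*` disk c r)).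
  by move=> k; apply: measurableI; [exact: measurable_G|exact: mAA].
apply: le_trans.
  apply: (@content_subadditive _ _ _ (@leb4 R) _
    (fun k => G (tk R L k) B `&` (disk c r `*` disk c r)) (2 * L)).
  - by move=> k _; exact: mGk.
  - apply: measurableI => //; apply: measurableU.
      by apply: measurableC.
    by apply: bigsetU_measurable => k _; exact: measurable_G.
  - move=> [s d] [[nA|Gs]] AA; first by case: nA.
    move: Gs; rewrite -(bigcup_mkord _ (fun k => G (tk R L k) B)) => -[k kL Gk].
    rewrite -(bigcup_mkord _ (fun k => G (tk R L k) B `&` (disk c r `*` disk c r))).
    by exists k.
have LR0 : 0 < L%:R :> R by lra.
have S1 : x0 + z + dd - (x0 - dd) = z + r / L%:R by rewrite /dd; field; lra.
have S2 : y0 + z + dd - (y0 - dd) = z + r / L%:R by rewrite /dd; field; lra.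
have dd0 : 0 <= dd by rewrite /dd; apply: divr_ge0; lra.
apply: (@le_trans _ _ (\sum_(k < 2 * L) ((lam * ((z + r / L%:R) ^+ 2 * wk R L k))%:E))%R).
  apply: lee_sum => k _.
  have k2L : (k < 2 * L)%N by [].
  have tk0 : 0 < tk R L k.
    by rewrite /tk; apply: divr_gt0; [rewrite ltr_pwDr // mulr_ge0 // ler0n| lra].
  have tk1 : tk R L k < 1.
    rewrite /tk ltr_pdivrMr; last lra.
    have : (k%:R + 1 <= 2 * L%:R :> R).
      by rewrite natr1 -natrM ler_nat.
    lra.
  case Lk: (L <= k)%N.
    have e1 : x0 - dd <= x0 + z + dd by lra.
    have e2 : y0 - dd <= y0 + z + dd by lra.
    apply: (le_trans (@G_bound1 R (tk R L k) (disk c r) _ _ _ _ tk0 e1 e2 mA)).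
    rewrite lamE -EFinM lee_fin /wk Lk S1 S2 ler_wpM2l //.
    all: try by rewrite le_eqVlt; apply/orP; left; apply/eqP; ring.
  have e1 : x0 - dd <= x0 + z + dd by lra.
  have e2 : y0 - dd <= y0 + z + dd by lra.
  apply: (le_trans (@G_bound2 R (tk R L k) (disk c r) _ _ _ _ tk1 e1 e2 mA)).
  rewrite lamE -EFinM lee_fin /wk Lk S1 S2 ler_wpM2l //.
  all: try by rewrite le_eqVlt; apply/orP; left; apply/eqP; ring.
rewrite sumEFin -!EFinM lee_fin -mulr_sumr -mulr_sumr.
have hw := sum_wk R L0; rewrite big_mkord in hw.
have fi := final_ineq z0 L6 Lz1 Lz2.
have Sq0 : 0 <= (z + r / L%:R) ^+ 2 by exact: sqr_ge0.
apply: (@le_trans _ _ (lam * ((z + r / L%:R) ^+ 2 * (4 * L)%:R))).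
  by rewrite ler_wpM2l // ler_wpM2l.
rewrite natrM.
apply: (@le_trans _ _ (lam * (162 / 10 * z * r))).
  by rewrite ler_wpM2l.
have h6 : 162 / 10 * z * r <= 6 * z / r * lam.
  have -> : 162 / 10 * z * r = 6 * z / r * (27 / 10 * r ^+ 2) by field; lra.
  by rewrite ler_wpM2l // divr_ge0 //; lra.
apply: (le_trans (ler_wpM2l lam0 h6)).
by rewrite le_eqVlt; apply/orP; left; apply/eqP; ring.
Qed.
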